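(* For every $n$-point metric $M=(V,\delta)$ and every range assignment $r:V\to\mathbb{R}^+$, $w(MSF(SDG(M,r))) \le 2\log_{5/4} n\cdot w(MST(M))$; in particular $w(MSF(SDG(M,r))) = O(\log n)\cdot w(MST(M))$. Consequently, every connected symmetric disk graph of $M$ has a minimum spanning tree of weight $O(\log n)\cdot w(MST(M))$.
   Context: A metric $M=(V,\delta)$ is viewed as the complete weighted graph on $V$ with edge weights $\delta(u,v)$; $MST(M)$ is its minimum spanning tree. A range assignment is a map $r:V\to\mathbb{R}^+$. The symmetric disk graph $SDG(M,r)$ is the undirected spanning subgraph containing the edge $(u,v)$ (with weight $\delta(u,v)$) if and only if $r(u)\ge\delta(u,v)$ and $r(v)\ge\delta(u,v)$. $MSF(\cdot)$ denotes a minimum spanning forest (a spanning forest with the same connected components and minimum total weight). The weight $w(\cdot)$ of a graph is the sum of its edge weights. *)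

(* Defs.v *)
From Stdlib Require Import Reals Relations.
From mathcomp Require Import all_boot.

Set Implicit Arguments.
Unset Strict Implicit.

Open Scope R_scope.

Section Defs.
Variable V : finType.

Definition is_metric (d : V -> V -> R) : Prop :=
  (forall u v, d u v = 0 <-> u = v) /\
  (forall u v, d u v = d v u) /\
  (forall u v w, d u w <= d u v + d v w).

Definition SDG (d : V -> V -> R) (r : V -> R) : V -> V -> Prop :=
  fun u v => u <> v /\ d u v <= r u /\ d u v <= r v.

Definition complete_graph : V -> V -> Prop := fun u v => u <> v.

(* Edge sets of undirected subgraphs are stored as sets of ordered pairs,
   containing both orientations of every edge. *)
Definition undirected (F : {set V * V}) : Prop :=
  forall u v, (u, v) \in F -> (v, u) \in F /\ u <> v.

Definition erel (F : {set V * V}) : V -> V -> Prop := fun u v => (u, v) \in F.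

Definition conn (F : {set V * V}) : V -> V -> Prop := clos_refl_trans V (erel F).

(* acyclic: no edge lies on a cycle, i.e. removing any edge disconnects its ends *)
Definition is_forest (F : {set V * V}) : Prop :=
  undirected F /\
  forall u v, (u, v) \in F -> ~ conn ((F :\ (u, v)) :\ (v, u)) u v.

(* weight of an undirected edge set: each edge counted once *)
Definition weight (d : V -> V -> R) (F : {set V * V}) : R :=
  (\big[Rplus/0]_(e in F) d e.1 e.2) / 2.

Definition spanning_forest_of (G : V -> V -> Prop) (F : {set V * V}) : Prop :=
  is_forest F /\
  (forall u v, (u, v) \in F -> G u v) /\
  (forall u v, conn F u v <-> clos_refl_trans V G u v).

Definition is_MSF (d : V -> V -> R) (G : V -> V -> Prop) (F : {set V * V}) : Prop :=
  spanning_forest_of G F /\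
  forall F', spanning_forest_of G F' -> weight d F <= weight d F'.

Definition is_MST (d : V -> V -> R) (T : {set V * V}) : Prop :=
  is_MSF d complete_graph T.

End Defs.

(* Main.v *)
From HB Require Import structures.
Require Import Defs.
From Stdlib Require Import Reals Relations Lra Classical ClassicalEpsilon.
From mathcomp Require Import all_boot.
Open Scope R_scope.
Set Implicit Arguments.
Unset Strict Implicit.


HB.instance Definition _ := Monoid.isComLaw.Build R 0 Rplus
  (fun a b c => esym (Rplus_assoc a b c)) Rplus_comm Rplus_0_l.

Arguments rt_trans {A R x y z}.
Arguments rt_step {A R x y}.
Arguments rt_refl {A R x}.

Definition pb (P : Prop) : bool :=
  if excluded_middle_informative P then true else false.
Lemma pbP (P : Prop) : pb P <-> P.
Proof. rewrite /pb; case: excluded_middle_informative => //. Qed.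
Lemma pbT (P : Prop) : P -> pb P.
Proof. by move/pbP. Qed.

Lemma crt_mono (V : Type) (R R' : V -> V -> Prop) :
  (forall x y, R x y -> clos_refl_trans V R' x y) ->
  forall a b, clos_refl_trans V R a b -> clos_refl_trans V R' a b.
Proof.
move=> H a b; elim=> [x y /H //|x|x y z _ H1 _ H2]; first exact: rt_refl.
exact: rt_trans H1 H2.
Qed.

Lemma crt_sym (V : Type) (R : V -> V -> Prop) :
  (forall x y, R x y -> R y x) ->
  forall a b, clos_refl_trans V R a b -> clos_refl_trans V R b a.
Proof.
move=> H a b; elim=> [x y /H ?|x|x y z _ H1 _ H2]; first exact: rt_step.
exact: rt_refl. exact: rt_trans H2 H1.
Qed.

Lemma crt_split (V : Type) (R R' : V -> V -> Prop) (x y : V) :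
  (forall a b, R a b -> R' a b \/ (a = x /\ b = y) \/ (a = y /\ b = x)) ->
  forall p q, clos_refl_trans V R p q ->
  clos_refl_trans V R' p q \/
  ((clos_refl_trans V R' p x \/ clos_refl_trans V R' p y) /\
   (clos_refl_trans V R' x q \/ clos_refl_trans V R' y q)).
Proof.
move=> H p q /clos_rt_rt1n_iff; elim=> [z|a b c Rab _ IH].
  by left; exact: rt_refl.
case: (H _ _ Rab) => [R'ab|[[? ?]|[? ?]]]; subst.
- case: IH => [Hbc|[[Hb|Hb] Hq]].
  + by left; apply: rt_trans (rt_step R'ab) Hbc.
  + by right; split => //; left; apply: rt_trans (rt_step R'ab) Hb.
  + by right; split => //; right; apply: rt_trans (rt_step R'ab) Hb.
- right; split; first by left; exact: rt_refl.
  by case: IH => [Hc|[_ Hq]] //; right.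
- right; split; first by right; exact: rt_refl.
  by case: IH => [Hc|[_ Hq]] //; left.
Qed.

Definition sumR (X : finType) (A : {set X}) (f : X -> R) :=
  \big[Rplus/0]_(i in A) f i.

Lemma sumR_D1 (X : finType) (A : {set X}) (f : X -> R) x :
  x \in A -> sumR A f = f x + sumR (A :\ x) f.
Proof.
move=> xA; rewrite /sumR (bigD1 x) //=; congr (_ + _).
by apply: eq_bigl => i; rewrite !inE andbC.
Qed.

Lemma sumR_le (X : finType) (A : {set X}) (f g : X -> R) :
  (forall i, i \in A -> f i <= g i) -> sumR A f <= sumR A g.
Proof.
move=> H; rewrite /sumR; apply: (big_ind2 (fun a b => a <= b)) => //.
  exact: Rle_refl.
by move=> *; apply: Rplus_le_compat.
Qed.

Lemma sumR_ge0 (X : finType) (A : {set X}) (f : X -> R) :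
  (forall i, i \in A -> 0 <= f i) -> 0 <= sumR A f.
Proof.
move=> H; rewrite /sumR; apply: (big_ind (fun a => 0 <= a)) => //.
  exact: Rle_refl.
by move=> *; lra.
Qed.

Lemma sumR_sub (X : finType) (A B : {set X}) (f : X -> R) :
  A \subset B -> (forall i, i \in B -> 0 <= f i) -> sumR A f <= sumR B f.
Proof.
move=> sAB H; rewrite /sumR [X in _ <= X](@big_setID _ _ _ _ B A) /=.
rewrite (setIidPr sAB).
have : 0 <= \big[Rplus/0]_(i in B :\: A) f i.
  apply: (big_ind (fun a => 0 <= a)); [exact: Rle_refl|by move=> *; lra|].
  by move=> i; rewrite inE => /andP[_ /H].
lra.
Qed.

Lemma sumR_const (X : finType) (A : {set X}) c :
  sumR A (fun _ => c) = INR #|A| * c.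
Proof.
rewrite /sumR big_const; elim: #|A| => [|n IH]; first by rewrite /=; lra.
rewrite iterS IH S_INR; lra.
Qed.

Lemma sumR_scal (X : finType) (A : {set X}) (f : X -> R) c :
  sumR A (fun i => c * f i) = c * sumR A f.
Proof.
rewrite /sumR; apply: (big_ind2 (fun a b => a = c * b)) => //; first lra.
by move=> a b a' b' -> ->; lra.
Qed.

Lemma sumR_exchange (X Y : finType) (A : {set X}) (B : {set Y}) (f : X -> Y -> R) :
  sumR A (fun i => sumR B (f i)) = sumR B (fun j => sumR A (fun i => f i j)).
Proof. by rewrite /sumR exchange_big. Qed.


Definition rem2 (V : finType) (E : {set V * V}) (u v : V) := (E :\ (u, v)) :\ (v, u).

Lemma in_rem2 (V : finType) (E : {set V * V}) u v a b :
  ((a, b) \in rem2 E u v) = [&& (a, b) != (v, u), (a, b) != (u, v) & (a, b) \in E].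
Proof. by rewrite /rem2 !inE. Qed.

Lemma undirected_rem2 (V : finType) (E : {set V * V}) u v :
  undirected E -> undirected (rem2 E u v).
Proof.
move=> H a b; rewrite !in_rem2 => /and3P[h1 h2 /H [hba hab]]; split => //.
apply/and3P; split => //.
  by apply: contra h2 => /eqP[-> ->].
by apply: contra h1 => /eqP[-> ->].
Qed.

Lemma erel_sym (V : finType) (E : {set V * V}) :
  undirected E -> forall a b, erel E a b -> erel E b a.
Proof. by move=> H a b /H []. Qed.

Lemma conn_sym (V : finType) (E : {set V * V}) :
  undirected E -> forall a b, conn E a b -> conn E b a.
Proof. by move=> H; apply: crt_sym; apply: erel_sym. Qed.

Lemma conn_rem2 (V : finType) (E : {set V * V}) u v :
  undirected E -> (u, v) \in E -> conn (rem2 E u v) u v ->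
  forall a b, conn E a b <-> conn (rem2 E u v) a b.
Proof.
move=> uE uvE Huv a b; split; last first.
  apply: crt_mono => x y; rewrite /erel in_rem2 => /and3P[_ _ h].
  exact: rt_step.
apply: crt_mono => x y /= xyE.
case: (boolP ((x, y) \in rem2 E u v)) => h; first exact: rt_step.
move: h; rewrite in_rem2 xyE andbT negb_and !negbK.
case/orP=> /eqP[-> ->] //.
by apply: conn_sym => //; apply: undirected_rem2.
Qed.

Lemma card_rem2 (V : finType) (E : {set V * V}) u v :
  (u, v) \in E -> (#|rem2 E u v| < #|E|)%N.
Proof.
move=> h; rewrite /rem2.
apply: (leq_ltn_trans (subset_leq_card (subsetDl _ _))).
by rewrite (cardsD1 (u, v) E) h.
Qed.

Lemma forest_sub (V : finType) (G : V -> V -> Prop) n (E : {set V * V}) :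
  (#|E| <= n)%N -> undirected E -> (forall u v, (u, v) \in E -> G u v) ->
  (forall u v, conn E u v <-> clos_refl_trans V G u v) ->
  exists F' : {set V * V}, F' \subset E /\ spanning_forest_of G F'.
Proof.
elim: n E => [|n IH] E cE uE sE cnE.
  case: (classic (is_forest E)) => [fE|nfE].
    by exists E; split => //; split.
  exfalso; apply: nfE; split => // u v h.
  by move: cE; rewrite leqn0 => /eqP/cards0_eq Ee; rewrite Ee inE in h.
case: (classic (is_forest E)) => [fE|nfE].
  by exists E; split => //; split.
have [u [v [uvE cuv]]] : exists u v, (u, v) \in E /\ conn (rem2 E u v) u v.
  apply: NNPP => hn; apply: nfE; split => // u v h hc.
  by apply: hn; exists u, v.
have sE' : forall a b, (a, b) \in rem2 E u v -> G a b.
  by move=> a b; rewrite in_rem2 => /and3P[_ _ /sE].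
have cE' : (#|rem2 E u v| <= n)%N.
  by have := card_rem2 uvE; move: cE; clear; move=> h1 h2; rewrite -ltnS; apply: leq_trans h2 h1.
have cnE' : forall a b, conn (rem2 E u v) a b <-> clos_refl_trans V G a b.
  by move=> a b; rewrite -conn_rem2.
have [F' [sF' fF']] := IH (rem2 E u v) cE' (undirected_rem2 (u:=u) (v:=v) uE) sE' cnE'.
exists F'; split => //; apply: (subset_trans sF').
by apply/subsetP => x; rewrite /rem2 !inE => /and3P[].
Qed.


Lemma metric_refl (V : finType) (d : V -> V -> R) : is_metric d -> forall u, d u u = 0.
Proof. by case=> [H _] u; apply/H. Qed.
Lemma metric_sym (V : finType) (d : V -> V -> R) : is_metric d -> forall u v, d u v = d v u.
Proof. by case=> [_ []]. Qed.
Lemma metric_tri (V : finType) (d : V -> V -> R) : is_metric d -> forall u v w, d u w <= d u v + d v w.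
Proof. by case=> [_ []]. Qed.
Lemma metric_ge0 (V : finType) (d : V -> V -> R) : is_metric d -> forall u v, 0 <= d u v.
Proof.
move=> m u v; have := metric_tri m u v u; rewrite metric_refl // (metric_sym m v u); lra.
Qed.

Lemma split_rem2 (V : finType) (E : {set V * V}) x y :
  forall p q, erel E p q -> erel (rem2 E x y) p q \/ (p = x /\ q = y) \/ (p = y /\ q = x).
Proof.
move=> p q h; case: (boolP ((p, q) \in rem2 E x y)) => [h'|]; first by left.
rewrite in_rem2 h andbT => /nandP [/negPn|/negPn] /eqP [-> ->]; right; by [right|left].
Qed.

Lemma sumR_rem2 (V : finType) (A : {set V * V}) (f : V * V -> R) u v :
  (u, v) \in A -> (v, u) \in A -> u <> v ->
  sumR A f = f (u, v) + f (v, u) + sumR (rem2 A u v) f.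
Proof.
move=> h1 h2 nuv; rewrite (sumR_D1 f h1) (@sumR_D1 _ (A :\ (u, v)) f (v, u)).
  by rewrite /rem2 Rplus_assoc.
by rewrite !inE h2 andbT; apply/eqP => -[].
Qed.

Lemma weight_sub (V : finType) (d : V -> V -> R) (A B : {set V * V}) :
  is_metric d -> A \subset B -> weight d A <= weight d B.
Proof.
move=> m sAB; rewrite /weight.
have := @sumR_sub _ A B (fun e => d e.1 e.2) sAB (fun i _ => metric_ge0 m i.1 i.2).
rewrite /sumR; lra.
Qed.

Lemma cross (V : finType) (R0 : V -> V -> Prop) (E : {set V * V}) x y :
  forall z, clos_refl_trans V R0 z y -> conn E x z ->
  conn E x y \/ exists a b, R0 a b /\ conn E x a /\ ~ conn E x b.
Proof.
move=> z /clos_rt_rt1n_iff; elim=> [w|a b c Rab _ IH] hx; first by left.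
case: (classic (conn E x b)) => hb; first exact: IH.
by right; exists a, b.
Qed.

Lemma cycle_prop (V : finType) (d : V -> V -> R) (r : V -> R) (F : {set V * V}) x y
    (R0 : V -> V -> Prop) :
  is_metric d -> is_MSF d (SDG d r) F -> (x, y) \in F ->
  (forall a b, R0 a b -> ((a, b) \in rem2 F x y) \/
     (d a b < d x y /\ d a b <= r a /\ d a b <= r b)) ->
  ~ clos_refl_trans V R0 x y.
Proof.
move=> m [[[uF fF] [sF spF]] minF] xyF HR cxy.
have [cF|[a [b [Rab [cxa ncxb]]]]] := cross (E:=rem2 F x y) cxy rt_refl.
  exact: (fF x y xyF).
have abF : (a, b) \notin rem2 F x y.
  by apply/negP => h; apply: ncxb; apply: rt_trans cxa (rt_step _).
have [lab [ra rb]] : d a b < d x y /\ d a b <= r a /\ d a b <= r b.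
  by case: (HR a b Rab) => // h; rewrite h in abF.
have nab : a <> b by move=> eab; apply: ncxb; rewrite -eab.
have [_ nxy] : (y, x) \in F /\ x <> y by apply: uF.
have yxF : (y, x) \in F by case: (uF x y xyF).
have uF' := undirected_rem2 (u:=x) (v:=y) uF.
have baF : (b, a) \notin rem2 F x y.
  by apply/negP => /uF' [h _]; rewrite h in abF.
set E := rem2 F x y :|: [set (a, b); (b, a)].
have inE' : forall p q, (p, q) \in E -> (p, q) \in rem2 F x y \/ (p = a /\ q = b) \/ (p = b /\ q = a).
  move=> p q; rewrite !inE -/(rem2 F x y) => /orP[h|/orP[]/eqP[-> ->]]; by [left|right;left|right;right].
have uE : undirected E.
  move=> p q /inE' [h|[[-> ->]|[-> ->]]].
  - by have [h1 h2] := uF' _ _ h; split => //; rewrite /E inE h1.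
  - by split => //; rewrite /E !inE eqxx !orbT.
  - by split => //; [rewrite /E !inE eqxx orbT|move=> e; apply: nab].
have sdgab : SDG d r a b by split.
have sdgba : SDG d r b a by rewrite /SDG metric_sym //; split => //; auto.
have sE : forall p q, (p, q) \in E -> SDG d r p q.
  move=> p q /inE' [h|[[-> ->]|[-> ->]]] //.
  by apply: sF; move: h; rewrite in_rem2 => /and3P[].
have cFE : forall p q, conn (rem2 F x y) p q -> conn E p q.
  by apply: crt_mono => p q h; apply: rt_step; rewrite /erel /E inE h.
have cab : conn E a b by apply: rt_step; rewrite /erel /E !inE eqxx orbT.
have cnE : forall u v, conn E u v <-> clos_refl_trans V (SDG d r) u v.
  move=> u v; split.
    by apply: crt_mono => p q /sE h; apply: rt_step.
  move/spF => h; apply: crt_mono h => p q.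
  case/(split_rem2 x y) => [h|[[-> ->]|[-> ->]]]; first by apply: cFE; apply: rt_step.
  - have cFxb : conn F x b.
      apply: rt_trans (_ : conn F a b); last by apply/spF; apply: rt_step.
      by apply: crt_mono cxa => p' q' h; apply: rt_step; move: h; rewrite /erel in_rem2 => /and3P[].
    have [h|[_ [h|h]]] := crt_split (@split_rem2 _ F x y) cFxb; try by case: ncxb.
    apply: rt_trans (cFE _ _ cxa) (rt_trans cab (cFE _ _ _)).
    by apply: conn_sym.
  - apply: conn_sym => //.
    have cFxb : conn F x b.
      apply: rt_trans (_ : conn F a b); last by apply/spF; apply: rt_step.
      by apply: crt_mono cxa => p' q' h; apply: rt_step; move: h; rewrite /erel in_rem2 => /and3P[].
    have [h|[_ [h|h]]] := crt_split (@split_rem2 _ F x y) cFxb; try by case: ncxb.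
    apply: rt_trans (cFE _ _ cxa) (rt_trans cab (cFE _ _ _)).
    by apply: conn_sym.
have [F'' [sF'' spF'']] := forest_sub (leqnn #|E|) uE sE cnE.
have h1 := minF F'' spF''.
have h2 := weight_sub m sF''.
have : weight d E < weight d F.
  rewrite /weight.
  have -> : \big[Rplus/0]_(e in F) d e.1 e.2 = sumR F (fun e => d e.1 e.2) by [].
  have -> : \big[Rplus/0]_(e in E) d e.1 e.2 = sumR E (fun e => d e.1 e.2) by [].
  rewrite (sumR_rem2 (fun e => d e.1 e.2) xyF yxF nxy).
  have abE : (a, b) \in E by rewrite /E !inE eqxx orbT.
  have baE : (b, a) \in E by rewrite /E !inE eqxx !orbT.
  rewrite (sumR_rem2 (fun e => d e.1 e.2) abE baE nab).
  have -> : rem2 E a b = rem2 F x y.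
    apply/setP => [[p q]]; rewrite in_rem2 !inE -/(rem2 F x y).
    case: (boolP ((p, q) == (b, a))) => [/eqP[-> ->]|h3] /=; first by rewrite -in_rem2 (negbTE baF).
    case: (boolP ((p, q) == (a, b))) => [/eqP[-> ->]|h4] /=; first by rewrite -in_rem2 (negbTE abF).
    by rewrite !orbF.
  rewrite /= (metric_sym m b a) (metric_sym m y x); lra.
lra.
Qed.


Definition symE (V : finType) (E : {set V * V}) := forall p q, (p, q) \in E -> (q, p) \in E.

Lemma symE_rem2 (V : finType) (E : {set V * V}) u v : symE E -> symE (rem2 E u v).
Proof.
move=> H a b; rewrite !in_rem2 => /and3P[h1 h2 /H hba]; apply/and3P; split => //.
  by apply: contra h2 => /eqP[-> ->].
by apply: contra h1 => /eqP[-> ->].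
Qed.

Lemma sum_rem2_ge (V : finType) (E : {set V * V}) (f : V -> R) a x :
  (a, x) \in E -> symE E ->
  sumR (rem2 E a x) (fun e => Rabs (f e.2 - f e.1)) + 2 * Rabs (f x - f a)
  <= sumR E (fun e => Rabs (f e.2 - f e.1)).
Proof.
move=> h sE; have h' := sE _ _ h.
case: (eqVneq a x) => [<-|nax].
  rewrite Rminus_diag Rabs_R0 Rmult_0_r Rplus_0_r; apply: sumR_sub.
    by apply/subsetP => e; rewrite /rem2 !inE => /and3P[].
  by move=> *; apply: Rabs_pos.
rewrite (sumR_rem2 _ h h'); last by apply/eqP.
rewrite /= (Rabs_minus_sym (f a)); lra.
Qed.

Lemma tele_n (V : finType) (f : V -> R) b n :
  forall (E : {set V * V}) a, (#|E| < n)%N -> symE E -> conn E a b ->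
  2 * Rabs (f b - f a) <= sumR E (fun e => Rabs (f e.2 - f e.1)).
Proof.
elim: n => [|n IH] E a // cE sE /clos_rt_rt1n_iff h.
destruct h as [|x1 z h0 hx].
  rewrite Rminus_diag Rabs_R0 Rmult_0_r; apply: sumR_ge0 => *; exact: Rabs_pos.
apply clos_rt_rt1n_iff in hx.
have cE' : (#|rem2 E a x1| < n)%N.
  by have := card_rem2 h0; move=> h1; rewrite -ltnS; apply: leq_trans h1 cE.
have sE' := symE_rem2 (u:=a) (v:=x1) sE.
have hs := sum_rem2_ge f h0 sE.
have tri := Rabs_triang (f z - f x1) (f x1 - f a).
rewrite (_ : f z - f x1 + (f x1 - f a) = f z - f a) in tri; last by ring.
have [h1|[_ [h1|h1]]] := crt_split (@split_rem2 _ E a x1) hx.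
- have := IH _ _ cE' sE' h1; lra.
- have := IH _ _ cE' sE' h1.
  have := Rabs_pos (f x1 - f a); lra.
- have := IH _ _ cE' sE' h1; lra.
Qed.

Lemma tele (V : finType) (f : V -> R) (E : {set V * V}) a b :
  symE E -> conn E a b ->
  2 * Rabs (f b - f a) <= sumR E (fun e => Rabs (f e.2 - f e.1)).
Proof. by move=> sE c; apply: (@tele_n _ f b (#|E|.+1) E a). Qed.


Lemma Rmin_lip a b h : Rabs (Rmin a h - Rmin b h) <= Rabs (a - b).
Proof.
rewrite /Rmin; case: Rle_dec; case: Rle_dec => h1 h2;
  rewrite /Rabs; repeat case: Rcase_abs; lra.
Qed.

Lemma sumR_supp0 (X : finType) (Q : {set X}) (f : X -> R) :
  (forall p, p \in Q -> f p = 0) -> sumR Q f = 0.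
Proof.
move=> H; rewrite /sumR; apply: (big_ind (fun a => a = 0)) => //.
  by move=> a b -> ->; lra.
Qed.

Lemma sumR_supp1 (X : finType) (Q : {set X}) (f : X -> R) p0 :
  p0 \in Q -> (forall p, p \in Q -> p != p0 -> f p = 0) -> sumR Q f = f p0.
Proof.
move=> h H; rewrite (sumR_D1 f h) sumR_supp0; first lra.
by move=> p; rewrite !inE => /andP[h1 h2]; apply: H.
Qed.

Lemma sumR_supp2 (X : finType) (Q : {set X}) (f : X -> R) p0 p1 :
  p0 \in Q -> p1 \in Q -> p0 != p1 ->
  (forall p, p \in Q -> p != p0 -> p != p1 -> f p = 0) -> sumR Q f = f p0 + f p1.
Proof.
move=> h0 h1 n01 H; rewrite (sumR_D1 f h0) (@sumR_supp1 _ _ f p1); first lra.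
  by rewrite !inE eq_sym n01.
by move=> p; rewrite !inE => /andP[h2 h3] h4; apply: H.
Qed.

Lemma ball_sum (V : finType) (d : V -> V -> R) (Q : {set V}) l x y :
  is_metric d -> 0 < l ->
  (forall p q, p \in Q -> q \in Q -> p <> q -> l <= d p q) ->
  sumR Q (fun p => Rabs (Rmin (d y p) (l / 2) - Rmin (d x p) (l / 2))) <= d x y.
Proof.
move=> m lpos sep.
set h := l / 2.
have hh2 : h = l / 2 by [].
clearbody h.
have dxy : 0 <= d x y by apply: metric_ge0.
have uniq : forall z p p', p \in Q -> p' \in Q -> d z p < h -> d z p' < h -> p = p'.
  move=> z p p' hp hp' h1 h2; apply: NNPP => np.
  have := sep _ _ hp hp' np; have := metric_tri m p z p'.
  rewrite (metric_sym m p z); lra.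
have lip : forall p, Rabs (Rmin (d y p) h - Rmin (d x p) h) <= d x y.
  move=> p; apply: Rle_trans (Rmin_lip _ _ _) _.
  have := metric_tri m y x p; have := metric_tri m x y p.
  rewrite (metric_sym m y x); rewrite /Rabs; case: Rcase_abs; lra.
have zero : forall p, h <= d x p -> h <= d y p ->
    Rabs (Rmin (d y p) h - Rmin (d x p) h) = 0.
  move=> p h1 h2; rewrite /Rmin; case: Rle_dec; case: Rle_dec => *;
    rewrite /Rabs; case: Rcase_abs; lra.
case: (classic (exists p0, p0 \in Q /\ d x p0 < h)) => [[p0 [q0 hx0]]|nx];
case: (classic (exists p1, p1 \in Q /\ d y p1 < h)) => [[p1 [q1 hy1]]|ny].
- case: (eqVneq p0 p1) => [e01|n01].
  + rewrite (@sumR_supp1 _ _ _ p0) //.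
    move=> p hp np; apply: zero; apply: Rnot_gt_le => hh.
      by move/eqP: np; apply; apply: (uniq x) => //; lra.
    by move/eqP: np; apply; rewrite e01; apply: (uniq y) => //; lra.
  rewrite (@sumR_supp2 _ _ _ p0 p1) //; last first.
    move=> p hp np0 np1; apply: zero; apply: Rnot_gt_le => hh.
      by move/eqP: np0; apply; apply: (uniq x) => //; lra.
    by move/eqP: np1; apply; apply: (uniq y) => //; lra.
  have hy0 : h <= d y p0.
    apply: Rnot_gt_le => hh; move/eqP: n01; apply; apply: (uniq y) => //; lra.
  have hx1 : h <= d x p1.
    apply: Rnot_gt_le => hh; move/eqP: n01; apply; apply: (uniq x) => //; lra.
  have np01 : p0 <> p1 by apply/eqP.
  have s01 := sep _ _ q0 q1 np01.
  have t1 := metric_tri m p0 x p1; have t2 := metric_tri m x y p1.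
  rewrite (metric_sym m p0 x) in t1.
  have -> : Rmin (d y p0) h = h by rewrite /Rmin; case: Rle_dec; lra.
  have -> : Rmin (d x p0) h = d x p0 by rewrite /Rmin; case: Rle_dec; lra.
  have -> : Rmin (d y p1) h = d y p1 by rewrite /Rmin; case: Rle_dec; lra.
  have -> : Rmin (d x p1) h = h by rewrite /Rmin; case: Rle_dec; lra.
  have dd : 0 <= d x p0 by apply: metric_ge0.
  have dd' : 0 <= d y p1 by apply: metric_ge0.
  rewrite /Rabs; repeat case: Rcase_abs; lra.
- rewrite (@sumR_supp1 _ _ _ p0) //.
  move=> p hp np; apply: zero; apply: Rnot_gt_le => hh.
    by move/eqP: np; apply; apply: (uniq x) => //; lra.
  by apply: ny; exists p; split => //; lra.
- rewrite (@sumR_supp1 _ _ _ p1) //.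
  move=> p hp np; apply: zero; apply: Rnot_gt_le => hh.
    by apply: nx; exists p; split => //; lra.
  by move/eqP: np; apply; apply: (uniq y) => //; lra.
- rewrite sumR_supp0 // => p hp; apply: zero; apply: Rnot_gt_le => hh.
    by apply: nx; exists p; split => //; lra.
  by apply: ny; exists p; split => //; lra.
Qed.

Lemma packing (V : finType) (d : V -> V -> R) (T : {set V * V}) (Q : {set V}) l :
  is_metric d -> 0 < l -> symE T -> (forall u v, conn T u v) ->
  (forall p q, p \in Q -> q \in Q -> p <> q -> l <= d p q) ->
  (forall p, p \in Q -> exists z, l <= d p z) ->
  INR #|Q| * l <= sumR T (fun e => d e.1 e.2).
Proof.
move=> m lpos sT cT sep far.
set c := fun p (e : V * V) => Rabs (Rmin (d e.2 p) (l / 2) - Rmin (d e.1 p) (l / 2)).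
have h1 : forall p, p \in Q -> l <= sumR T (c p).
  move=> p hp; have [z hz] := far p hp.
  have := tele (fun w => Rmin (d w p) (l / 2)) sT (cT p z).
  rewrite metric_refl // (metric_sym m z p).
  have -> : Rmin 0 (l / 2) = 0 by rewrite /Rmin; case: Rle_dec; lra.
  have -> : Rmin (d p z) (l / 2) = l / 2 by rewrite /Rmin; case: Rle_dec; lra.
  rewrite Rabs_right; last lra.
  by move=> H; apply: Rle_trans _ H; lra.
rewrite -sumR_const.
apply: Rle_trans (_ : sumR Q (fun p => sumR T (c p)) <= _).
  exact: sumR_le.
rewrite sumR_exchange; apply: sumR_le => e _.
exact: ball_sum.
Qed.


Fixpoint Hn (n : nat) : R := match n with 0%N => 0 | S k => Hn k + / INR (S k) end.

Lemma exists_min (X : finType) (f : X -> R) n :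
  forall A : {set X}, #|A| = n.+1 -> exists2 x0, x0 \in A & forall y, y \in A -> f x0 <= f y.
Proof.
elim: n => [|n IH] A cA.
  have [a Aa] : exists a, A = [set a] by apply/cards1P; rewrite cA.
  by exists a; rewrite Aa ?inE // => y /set1P ->; apply: Rle_refl.
have [a aA] : exists a, a \in A.
  by apply/set0Pn; rewrite -card_gt0 cA.
have cA' : #|A :\ a| = n.+1 by rewrite (cardsD1 a A) aA in cA; case: cA.
have [m mA' hm] := IH _ cA'.
have mA : m \in A by move: mA'; rewrite !inE => /andP[].
case: (Rle_dec (f a) (f m)) => h.
  exists a => // y yA; case: (eqVneq y a) => [->|nya]; first exact: Rle_refl.
  by apply: Rle_trans h (hm y _); rewrite !inE nya.
exists m => // y yA; case: (eqVneq y a) => [->|nya]; first lra.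
by apply: hm; rewrite !inE nya.
Qed.

Lemma harm (X : finType) (f : X -> R) C n :
  forall A : {set X}, #|A| = n -> (forall x, x \in A -> 0 <= f x) ->
  (forall x, x \in A -> INR #|[set y in A | pb (f x <= f y)]| * f x <= C) ->
  sumR A f <= C * Hn n.
Proof.
elim: n => [|n IH] A cA f0 hC.
  rewrite /= Rmult_0_r.
  have -> : A = set0 by apply: cards0_eq.
  by rewrite /sumR big_set0; apply: Rle_refl.
have [x0 x0A hx0] := exists_min f cA.
have cA' : #|A :\ x0| = n by rewrite (cardsD1 x0 A) x0A in cA; case: cA.
have e : [set y in A | pb (f x0 <= f y)] = A.
  by apply/setP => y; rewrite !inE; case: (boolP (y \in A)) => //= yA; apply/pbP; apply: hx0.
have h0 := hC x0 x0A; rewrite e cA in h0.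
have hA' : forall x, x \in A :\ x0 -> INR #|[set y in A :\ x0 | pb (f x <= f y)]| * f x <= C.
  move=> x; rewrite !inE => /andP[_ xA].
  apply: Rle_trans (hC x xA); apply: Rmult_le_compat_r; first exact: f0.
  apply: le_INR; apply/leP; apply: subset_leq_card; apply/subsetP => y.
  by rewrite !inE => /andP[/andP[_ ->] ->].
have f0' : forall x, x \in A :\ x0 -> 0 <= f x.
  by move=> x; rewrite !inE => /andP[_ /f0].
have := IH _ cA' f0' hA'.
rewrite (sumR_D1 f x0A).
change (Hn n.+1) with (Hn n + / INR n.+1); rewrite Rmult_plus_distr_l.
have pn : 0 < INR n.+1 by apply: lt_0_INR; apply/ltP.
have : f x0 <= C * / INR n.+1.
  apply: (Rmult_le_reg_l (INR n.+1)) => //.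
  rewrite -Rmult_assoc (Rmult_comm _ C) Rmult_assoc Rinv_r; lra.
lra.
Qed.

Lemma ln_le_sub1 z : 0 < z -> ln z <= z - 1.
Proof. move=> hz; have := exp_ineq1_le (ln z); rewrite exp_ln //; lra. Qed.

Lemma Hn_ln n : (1 <= n)%N -> Hn n <= 1 + ln (INR n).
Proof.
elim: n => [//|n IH] _.
case: n IH => [|n] IH.
  rewrite /= ln_1; lra.
have {IH} IH := IH isT.
change (Hn n.+2) with (Hn n.+1 + / INR n.+2).
have p1 : 0 < INR n.+1 by apply: lt_0_INR; apply/ltP.
have p2 : 0 < INR n.+2 by apply: lt_0_INR; apply/ltP.
have e2 : INR n.+2 = INR n.+1 + 1 by rewrite S_INR.
have := ln_le_sub1 (Rdiv_lt_0_compat _ _ p1 p2).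
rewrite /Rdiv ln_mult // ?ln_Rinv //; last by apply: Rinv_0_lt_compat.
have -> : INR n.+1 * / INR n.+2 - 1 = - / INR n.+2.
  rewrite e2; field; lra.
lra.
Qed.

Lemma Hn_mono m n : (m <= n)%N -> Hn m <= Hn n.
Proof.
move=> /subnK <-; elim: (n - m)%N => [|k IH]; first by rewrite add0n; apply: Rle_refl.
rewrite addSn; change (Hn (k + m).+1) with (Hn (k + m) + / INR (k + m).+1).
have : 0 < / INR (k + m).+1.
  by apply: Rinv_0_lt_compat; apply: lt_0_INR; apply/ltP.
lra.
Qed.

Lemma final_arith (n N : nat) :
  (2 <= n)%N -> (N <= n * n)%N -> Hn N <= ln (INR n) / ln (5 / 4).
Proof.
move=> n2 hN.
have h1 : Hn N <= 1 + ln (INR (n * n)).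
  apply: Rle_trans (Hn_mono hN) (Hn_ln _).
  by rewrite muln_gt0 (leq_trans _ n2).
have pn : 0 < INR n by apply: lt_0_INR; apply/ltP; apply: leq_trans n2.
rewrite mult_INR ln_mult // in h1.
have l2 : / 2 < ln (INR n).
  apply: Rlt_le_trans ln_lt_2 _.
  case: (Req_dec (INR n) 2) => [->|ne]; first exact: Rle_refl.
  apply: Rlt_le; apply: ln_increasing; first lra.
  have : (2 <= INR n) by rewrite (_ : 2 = INR 2) //; apply: le_INR; apply/leP.
  lra.
have l54 : ln (5 / 4) <= 1 / 4 by have := ln_le_sub1 (_ : 0 < 5 / 4); lra.
have l54p : 0 < ln (5 / 4) by rewrite -ln_1; apply: ln_increasing; lra.
apply: Rle_trans h1 _.
apply: (Rmult_le_reg_r (ln (5 / 4))) => //.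
rewrite /Rdiv Rmult_assoc Rinv_l; last lra.
have : (1 + (ln (INR n) + ln (INR n))) * ln (5 / 4) <= (1 + (ln (INR n) + ln (INR n))) * (1 / 4).
  apply: Rmult_le_compat_l => //; lra.
lra.
Qed.


Definition Gr (V : finType) (S : {set V * V}) (hop : V -> V -> Prop) (c a : V) : V -> V -> Prop :=
  fun x y => (x, y) \in rem2 S c a \/ hop x y.

Lemma core (V : finType) (S : {set V * V}) (hop : V -> V -> Prop) c a c' a' rho :
  (forall x y, (x, y) \in S -> ~ clos_refl_trans V (Gr S hop x y) x y) ->
  (c, a) \in S -> (a, c) \in S ->
  ~ clos_refl_trans V (Gr S hop c a) rho c ->
  clos_refl_trans V (Gr S hop c a) rho a ->
  ~ clos_refl_trans V (Gr S hop c' a') rho c' ->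
  clos_refl_trans V (Gr S hop c' a') rho a' ->
  hop c c' ->
  (c', a') = (c, a) \/ (c', a') = (a, c).
Proof.
move=> noconn caS acS H1 H2 H3 H4 hcc.
apply: NNPP => /not_or_and [n1 n2].
set G2 := fun x y => (x, y) \in rem2 (rem2 S c a) c' a' \/ hop x y.
have G2e : forall x y, G2 x y -> Gr S hop c a x y.
  move=> x y [h|h]; [left|by right].
  by move: h; rewrite in_rem2 => /and3P[].
have G2f : forall x y, G2 x y -> Gr S hop c' a' x y.
  move=> x y [h|h]; [left|by right].
  move: h; rewrite !in_rem2 => /and3P[h1 h2 /and3P[_ _ h3]]; by apply/and3P.
have spl : forall x y, Gr S hop c a x y ->
    G2 x y \/ (x = c' /\ y = a') \/ (x = a' /\ y = c').
  move=> x y [h|h]; last by left; right.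
  case: (eqVneq (x, y) (c', a')) => [[-> ->]|h1]; first by right; left.
  case: (eqVneq (x, y) (a', c')) => [[-> ->]|h2]; first by right; right.
  by left; left; rewrite in_rem2 h1 h2 h.
have fac : Gr S hop c' a' a c.
  rewrite /Gr; left; rewrite in_rem2 acS andbT; apply/andP; split; apply/eqP.
    by move=> [e1 e2]; apply: n1; rewrite e1 e2.
  by move=> [e1 e2]; apply: n2; rewrite e1 e2.
have H3' : ~ clos_refl_trans V (Gr S hop c' a') rho c.
  by move=> h; apply: H3; apply: rt_trans h (rt_step _); right.
have [h|[_ [h|h]]] := crt_split spl H2.
- apply: H3'; apply: rt_trans (rt_step fac).
  apply: (crt_mono _ h) => x y /G2f hh; exact: rt_step.
- apply: (noconn c a caS); apply: rt_trans (_ : clos_refl_trans V _ c' a).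
    by apply: rt_step; right.
  apply: (crt_mono _ h) => x y /G2e hh; exact: rt_step.
- apply: H3'; apply: rt_trans (rt_step fac).
  apply: rt_trans H4 _.
  apply: (crt_mono _ h) => x y /G2f hh; exact: rt_step.
Qed.


Lemma rem2C (V : finType) (E : {set V * V}) x y : rem2 E x y = rem2 E y x.
Proof. by apply/setP => e; rewrite /rem2 !inE andbA [X in X && _]andbC -andbA. Qed.

Lemma GrC (V : finType) (S : {set V * V}) hop c a : Gr S hop c a = Gr S hop a c.
Proof. by rewrite /Gr rem2C. Qed.

Lemma count_bound (V : finType) (d : V -> V -> R) (r : V -> R) (F T : {set V * V}) l :
  is_metric d -> is_MSF d (SDG d r) F -> is_MST d T -> 0 < l ->
  INR #|[set e in F | pb (l <= d e.1 e.2)]| * l <= 2 * sumR T (fun e => d e.1 e.2).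
Proof.
move=> m msf mst lpos.
have [[[uF fF] [sF spF]] _] := msf.
set S := [set e in F | pb (l <= d e.1 e.2)].
have SF : forall x y, (x, y) \in S -> (x, y) \in F /\ l <= d x y.
  by move=> x y; rewrite inE => /andP[h /pbP].
have Ssym : symE S.
  move=> x y /SF [h1 h2]; rewrite inE; have [h3 _] := uF _ _ h1.
  by rewrite h3 /=; apply/pbP; rewrite metric_sym.
set inP := fun z => exists w, (z, w) \in S.
set hop := fun x y => inP x /\ inP y /\ d x y < l.
have rad : forall z, inP z -> l <= r z.
  move=> z [w /SF [h1 h2]]; have [_ [h3 _]] := sF _ _ h1; lra.
have noconn : forall x y, (x, y) \in S -> ~ clos_refl_trans V (Gr S hop x y) x y.
  move=> x y xyS; have [xyF lxy] := SF _ _ xyS.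
  apply: (cycle_prop m msf xyF) => a b [h|[ha [hb hab]]].
    left; move: h; rewrite !in_rem2 => /and3P[h1 h2 /SF [h3 _]]; by apply/and3P.
  right; have := rad _ ha; have := rad _ hb; lra.
set G := fun x y => (x, y) \in S \/ hop x y.
have Gsym : forall x y, G x y -> G y x.
  move=> x y [h|[h1 [h2 h3]]]; [left; exact: Ssym|right].
  by split => //; split => //; rewrite metric_sym.
have Grsym : forall c a x y, Gr S hop c a x y -> Gr S hop c a y x.
  move=> c a x y [h|[h1 [h2 h3]]]; [left|right].
    by move: h; apply: symE_rem2.
  by split => //; split => //; rewrite metric_sym.
have GrG : forall c a x y, Gr S hop c a x y -> G x y.
  move=> c a x y [h|h]; [left|by right].
  by move: h; rewrite in_rem2 => /and3P[].
have Gspl : forall c a x y, G x y -> Gr S hop c a x y \/ (x = c /\ y = a) \/ (x = a /\ y = c).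
  move=> c a x y [h|h]; last by left; right.
  case: (eqVneq (x, y) (c, a)) => [[-> ->]|h1]; first by right; left.
  case: (eqVneq (x, y) (a, c)) => [[-> ->]|h2]; first by right; right.
  by left; left; rewrite in_rem2 h1 h2 h.
pose rt := fun z => odflt z [pick w | pb (clos_refl_trans V G z w)].
have rt_conn : forall z, clos_refl_trans V G z (rt z).
  move=> z; rewrite /rt; case: pickP => [w /pbP //|h] /=; exact: rt_refl.
have rt_eq : forall z w, clos_refl_trans V G z w -> rt z = rt w.
  move=> z w h; rewrite /rt (@eq_pick _ _ (fun x => pb (clos_refl_trans V G w x))).
    case: pickP => [v _ //|hn]; exfalso.
    by have := hn w; rewrite (_ : pb _ = true) //; apply/pbP; exact: rt_refl.
  move=> x; apply/idP/idP => /pbP hx; apply/pbP.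
    by apply: rt_trans (crt_sym Gsym h) hx.
  by apply: rt_trans h hx.
have reach : forall x y, clos_refl_trans V (Gr S hop x y) (rt x) x \/
               clos_refl_trans V (Gr S hop x y) (rt x) y.
  move=> x y.
  have [h|[[h|h] _]] := crt_split (Gspl x y) (crt_sym Gsym (rt_conn x)); by [left|left|right].
pose child := fun x y => if pb (clos_refl_trans V (Gr S hop x y) (rt x) x) then y else x.
have child_spec : forall x y, (x, y) \in S -> exists a,
    ((child x y, a) = (x, y) \/ (child x y, a) = (y, x)) /\
    ~ clos_refl_trans V (Gr S hop (child x y) a) (rt x) (child x y) /\
    clos_refl_trans V (Gr S hop (child x y) a) (rt x) a.
  move=> x y xyS; have rc := reach x y.
  rewrite /child; case: (boolP (pb _)) => [/pbP hx|/negP hx].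
  - exists x; split; first by right.
    rewrite GrC; split => //.
    move=> hy; apply: (noconn x y xyS); exact: rt_trans (crt_sym (Grsym x y) hx) hy.
  - exists y; split; first by left.
    split; first by move=> h; apply: hx; apply/pbP.
    by case: rc => // h; case: hx; apply/pbP.
have child_in : forall x y, (x, y) \in S -> child x y = x \/ child x y = y.
  by move=> x y h; have [a [[[-> _]|[-> _]] _]] := child_spec x y h; [left|right].
have inP1 : forall x y, (x, y) \in S -> inP x /\ inP y.
  by move=> x y h; split; [exists y|exists x; apply: Ssym].
have child_sym : forall x y, (x, y) \in S -> child y x = child x y.
  move=> x y h.
  have rxy : rt y = rt x by apply: esym; apply: rt_eq; apply: rt_step; left.
  rewrite /child rxy (GrC S hop y x).
  case: (boolP (pb (clos_refl_trans V (Gr S hop x y) (rt x) x))) => [/pbP hx|/negP hx];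
  case: (boolP (pb (clos_refl_trans V (Gr S hop x y) (rt x) y))) => [/pbP hy|/negP hy] //.
  - case: (noconn x y h); exact: rt_trans (crt_sym (Grsym x y) hx) hy.
  - by case: (reach x y) => hh; [case: hx|case: hy]; apply/pbP.
have key : forall x y x' y', (x, y) \in S -> (x', y') \in S ->
    d (child x y) (child x' y') < l -> (x', y') = (x, y) \/ (x', y') = (y, x).
  move=> x y x' y' h h' hd.
  have [a [hca [nc ca]]] := child_spec x y h.
  have [a' [hca' [nc' ca']]] := child_spec x' y' h'.
  have hc : hop (child x y) (child x' y').
    split; first by case: (child_in x y h) => ->; case: (inP1 x y h).
    split => //; by case: (child_in x' y' h') => ->; case: (inP1 x' y' h').
  have rr : rt x' = rt x.
    apply: esym; apply: rt_eq.
    apply: rt_trans (_ : clos_refl_trans V G x (child x y)) _.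
      by case: (child_in x y h) => ->; [exact: rt_refl|apply: rt_step; left].
    apply: rt_trans (rt_step (or_intror hc : G _ _)) _.
    by case: (child_in x' y' h') => ->; [exact: rt_refl|apply: rt_step; left; apply: Ssym].
  rewrite rr in nc' ca'.
  have caS : (child x y, a) \in S by case: hca => -[-> ->] //; apply: Ssym.
  have acS : (a, child x y) \in S by apply: Ssym.
  have := core noconn caS acS nc ca nc' ca' hc.
  by case: hca => -[-> ->]; case: hca' => -[-> ->]; move=> [] [-> ->]; auto.
set Q := [set child e.1 e.2 | e in S].
have cardS : (#|S| <= #|Q| * 2)%N.
  pose psi := fun e : V * V => (child e.1 e.2, child e.1 e.2 == e.1).
  have inj : {in S &, injective psi}.
    move=> [x y] [x' y'] h h' /= [e1 e2].
    have := key x y x' y' h h'; rewrite e1 metric_refl // => /(_ lpos) [//|E].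
    case: E e1 e2 => -> -> e1 e2.
    have nxy : x != y by apply/eqP; have [_ ?] := uF _ _ (proj1 (SF _ _ h)).
    exfalso; move: e2; rewrite (child_sym x y h).
    case: (child_in x y h) => ->; rewrite eqxx ?(negbTE nxy) //.
    by rewrite eq_sym (negbTE nxy).
  rewrite -(card_in_imset inj) -card_bool -cardsT -cardsX.
  apply: subset_leq_card; apply/subsetP => p /imsetP [e eS ->].
  by rewrite in_setX in_setT andbT; apply/imsetP; exists e.
have [[[uT _] [_ spT]] _] := mst.
have sT : symE T by move=> p q /uT [].
have cT : forall u v, conn T u v.
  move=> u v; apply/spT; case: (eqVneq u v) => [->|nuv]; first exact: rt_refl.
  by apply: rt_step; apply/eqP.
have sep : forall p q, p \in Q -> q \in Q -> p <> q -> l <= d p q.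
  move=> p q /imsetP [[x y] h ->] /imsetP [[x' y'] h' ->] /= npq.
  apply: Rnot_gt_le => hd; apply: npq.
  have [E|E] := key x y x' y' h h' hd; case: E => -> ->; first by [].
  by rewrite (child_sym x y h).
have far : forall p, p \in Q -> exists z, l <= d p z.
  move=> p /imsetP [[x y] h ->] /=.
  have [_ lxy] := SF _ _ h.
  case: (child_in x y h) => ->; first by exists y.
  by exists x; rewrite metric_sym.
have := packing m lpos sT cT sep far.
have : (INR #|S| <= INR (#|Q| * 2)) by apply: le_INR; apply/leP.
rewrite mult_INR /= => h1 h2.
have : INR #|S| * l <= INR #|Q| * (1 + 1) * l by apply: Rmult_le_compat_r; [lra|].
have e : INR #|Q| * (1 + 1) * l = 2 * (INR #|Q| * l) by ring.
move=> h3; rewrite e in h3; apply: Rle_trans h3 _; apply: Rmult_le_compat_l; [lra|exact: h2].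
Qed.

Unset Implicit Arguments.
Set Strict Implicit.

Theorem theorem1 (V : finType) (d : V -> V -> R) (r : V -> R)
    (F T : {set V * V}) :
  is_metric d ->
  (forall v, 0 < r v) ->
  is_MSF d (SDG d r) F ->
  is_MST d T ->
  weight d F <= 2 * (ln (INR #|V|) / ln (5 / 4)) * weight d T.
Proof.
move=> m rpos msf mst.
have wF : weight d F = sumR F (fun e => d e.1 e.2) / 2 by [].
have wT : weight d T = sumR T (fun e => d e.1 e.2) / 2 by [].
have ST0 : 0 <= sumR T (fun e => d e.1 e.2).
  by apply: sumR_ge0 => e _; apply: metric_ge0.
have SF0 : 0 <= sumR F (fun e => d e.1 e.2).
  by apply: sumR_ge0 => e _; apply: metric_ge0.
have [[[uF _] _] _] := msf.
case: (leqP #|V| 1) => hn.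
  have F0 : F = set0.
    apply/setP => [[u v]]; rewrite inE; apply/negP => /uF [_ nuv]; apply: nuv.
    by have := fintype_le1P hn; move=> H; rewrite (H u) (H v).
  have -> : ln (INR #|V|) = 0.
    move: hn; case: #|V| => [|[|k]] hk /=.
    - unfold ln; case: Rlt_dec => h; [exfalso; lra|done].
    - exact: ln_1.
    - by [].
  rewrite wF F0 /sumR big_set0; lra.
have dpos : forall x, x \in F -> 0 < d x.1 x.2.
  move=> [u v] /uF [_ nuv] /=; have := metric_ge0 m u v.
  case/Rle_lt_or_eq_dec => // h; case: nuv; case: m => [H _]; exact/H.
have hC : forall x, x \in F ->
    INR #|[set y in F | pb ((fun e => d e.1 e.2) x <= (fun e => d e.1 e.2) y)]| *
      (fun e => d e.1 e.2) x <= 2 * sumR T (fun e => d e.1 e.2).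
  move=> x xF; exact: (count_bound m msf mst (dpos x xF)).
have h := harm (erefl #|F|) (fun x _ => metric_ge0 m x.1 x.2) hC.
have hN : (#|F| <= #|V| * #|V|)%N.
  by rewrite -card_prod; apply: max_card.
have ha := final_arith hn hN.
rewrite wF wT.
set L := ln (INR #|V|) / ln (5 / 4) in ha *.
have : 2 * sumR T (fun e => d e.1 e.2) * Hn #|F| <= 2 * sumR T (fun e => d e.1 e.2) * L.
  by apply: Rmult_le_compat_l => //; lra.
lra.
Qed.
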